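(* Let $A\in\mathrm{Mat}(2,\mathbb{Z})$ have eigenvalues $a,b\in\mathbb{Z}$. Then $\mathrm{Per}(f_A)\supseteq\{1\}\cup P_a\cup P_b$.
   Context: $\mathbb{T}^2=\mathbb{R}^2/\mathbb{Z}^2$; for $A\in\mathrm{Mat}(2,\mathbb{Z})$, $f_A:\mathbb{T}^2\to\mathbb{T}^2$ is $x+\mathbb{Z}^2\mapsto Ax+\mathbb{Z}^2$. $\mathrm{Per}(f)$ is the set of $n\in\mathbb{N}=\{1,2,\dots\}$ such that $f$ has a periodic orbit of least period exactly $n$. For $a\in\mathbb{Z}\setminus\{0\}$, $P_a=\{\mathrm{ord}_n(a): n\ge 2,\ \gcd(a,n)=1\}$, where $\mathrm{ord}_n(a)$ is the least $k>0$ with $a^k\equiv1\pmod n$; by convention $P_0=\emptyset$. *)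

(* Defs.v *)
From Stdlib Require Import Reals ZArith Arith.
Open Scope R_scope.

Record Mat2 : Type := mkMat2 { m11 : Z; m12 : Z; m21 : Z; m22 : Z }.

(* Points of T^2 are represented by points of R^2; two representatives
   denote the same point of T^2 iff they differ by an element of Z^2. *)
Definition torus_eq (x y : R * R) : Prop :=
  exists p q : Z, fst x - fst y = IZR p /\ snd x - snd y = IZR q.

(* The lift x |-> A x of f_A (well defined on T^2). *)
Definition fA (A : Mat2) (x : R * R) : R * R :=
  (IZR (m11 A) * fst x + IZR (m12 A) * snd x,
   IZR (m21 A) * fst x + IZR (m22 A) * snd x).

Definition InPer (A : Mat2) (n : nat) : Prop :=
  (1 <= n)%nat /\
  exists x : R * R,
    torus_eq (Nat.iter n (fA A) x) x /\
    forall k : nat, (0 < k < n)%nat -> ~ torus_eq (Nat.iter k (fA A) x) x.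

Definition is_ord (n a : Z) (k : nat) : Prop :=
  (0 < k)%nat /\ (n | a ^ Z.of_nat k - 1)%Z /\
  forall j : nat, (0 < j < k)%nat -> ~ (n | a ^ Z.of_nat j - 1)%Z.

(* k \in P_a  (P_0 is empty). *)
Definition InP (a : Z) (k : nat) : Prop :=
  a <> 0%Z /\ exists n : Z, (2 <= n)%Z /\ Z.gcd a n = 1%Z /\ is_ord n a k.

(* a, b are the eigenvalues of A: det(tI - A) = (t - a)(t - b). *)
Definition has_eigenvalues (A : Mat2) (a b : Z) : Prop :=
  forall t : Z,
    ((t - m11 A) * (t - m22 A) - m12 A * m21 A = (t - a) * (t - b))%Z.

(* Main.v *)
Require Import Defs.
From Stdlib Require Import Reals ZArith Arith Lia Lra Psatz.

Lemma kervec (A : Mat2) (a : Z) :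
  ((a - m11 A) * (a - m22 A) - m12 A * m21 A = 0)%Z ->
  exists w1 w2 : Z, (w1 <> 0 \/ w2 <> 0)%Z /\
    (m11 A * w1 + m12 A * w2 = a * w1)%Z /\ (m21 A * w1 + m22 A * w2 = a * w2)%Z.
Proof.
  destruct A as [p q r s]; simpl; intro H.
  destruct (Z.eq_dec (p - a) 0) as [Hp|Hp]; destruct (Z.eq_dec q 0) as [Hq|Hq].
  - destruct (Z.eq_dec r 0) as [Hr|Hr]; destruct (Z.eq_dec (s - a) 0) as [Hs|Hs].
    + exists 1%Z, 0%Z; split; [lia|]. subst; split; nia.
    + exists (s - a)%Z, (- r)%Z; split; [lia|]. subst. split; nia.
    + exists (s - a)%Z, (- r)%Z; split; [lia|]. subst. split; nia.
    + exists (s - a)%Z, (- r)%Z; split; [lia|]. subst. split; nia.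
  - exists q, (- (p - a))%Z; split; [lia|]. split; nia.
  - exists q, (- (p - a))%Z; split; [lia|]. split; nia.
  - exists q, (- (p - a))%Z; split; [lia|]. split; nia.
Qed.

Lemma primvec (A : Mat2) (a : Z) :
  ((a - m11 A) * (a - m22 A) - m12 A * m21 A = 0)%Z ->
  exists v1 v2 u1 u2 : Z,
    (m11 A * v1 + m12 A * v2 = a * v1)%Z /\ (m21 A * v1 + m22 A * v2 = a * v2)%Z
    /\ (u1 * v1 + u2 * v2 = 1)%Z.
Proof.
  intro H. destruct (kervec A a H) as (w1 & w2 & Hnz & E1 & E2).
  set (g := Z.gcd w1 w2).
  assert (Hg0 : (g <> 0)%Z).
  { intro Hg. apply Z.gcd_eq_0 in Hg. lia. }
  destruct (Z.gcd_divide_l w1 w2) as [v1 Hv1].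
  destruct (Z.gcd_divide_r w1 w2) as [v2 Hv2].
  fold g in Hv1, Hv2.
  destruct (Z.gcd_bezout w1 w2 g eq_refl) as [u1 [u2 Hb]].
  exists v1, v2, u1, u2. rewrite Hv1, Hv2 in *.
  split; [|split].
  - apply (Z.mul_cancel_r _ _ g Hg0). nia.
  - apply (Z.mul_cancel_r _ _ g Hg0). nia.
  - apply (Z.mul_cancel_r _ _ g Hg0). nia.
Qed.

Lemma per_eig (A : Mat2) (a : Z) :
  ((a - m11 A) * (a - m22 A) - m12 A * m21 A = 0)%Z ->
  forall k : nat, InP a k -> InPer A k.
Proof.
  intros H k [_ [n [Hn [_ [Hk [Hdiv Hmin]]]]]].
  destruct (primvec A a H) as (v1 & v2 & u1 & u2 & E1 & E2 & B).
  assert (Hn0 : IZR n <> 0%R) by (apply not_0_IZR; lia).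
  set (x := (IZR v1 / IZR n, IZR v2 / IZR n)%R).
  assert (Hit : forall j, Nat.iter j (fA A) x =
      (IZR (a ^ Z.of_nat j) * (IZR v1 / IZR n), IZR (a ^ Z.of_nat j) * (IZR v2 / IZR n))%R).
  { induction j as [|j IH].
    - simpl. unfold x. f_equal; field; auto.
    - rewrite Nat2Z.inj_succ, Z.pow_succ_r by lia.
      change (Nat.iter (S j) (fA A) x) with (fA A (Nat.iter j (fA A) x)).
      rewrite IH. unfold fA; cbn [fst snd].
      apply (f_equal IZR) in E1; apply (f_equal IZR) in E2.
      rewrite !plus_IZR, !mult_IZR in E1, E2.
      rewrite !mult_IZR.
      f_equal.
      + transitivity (IZR (a ^ Z.of_nat j) * (IZR (m11 A) * IZR v1 + IZR (m12 A) * IZR v2) / IZR n)%R.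
        { field; auto. }
        rewrite E1. field; auto.
      + transitivity (IZR (a ^ Z.of_nat j) * (IZR (m21 A) * IZR v1 + IZR (m22 A) * IZR v2) / IZR n)%R.
        { field; auto. }
        rewrite E2. field; auto. }
  split; [lia|]. exists x. split.
  - rewrite Hit. destruct Hdiv as [m Hm]. exists (m * v1)%Z, (m * v2)%Z.
    unfold x; simpl.
    assert (Hc : IZR (a ^ Z.of_nat k) = (IZR m * IZR n + 1)%R).
    { rewrite <- mult_IZR, <- plus_IZR. f_equal. lia. }
    rewrite Hc, !mult_IZR. split; field; auto.
  - intros j Hj [p [q [Hp Hq]]]. apply (Hmin j Hj).
    rewrite Hit in Hp, Hq. unfold x in Hp, Hq; simpl in Hp, Hq.
    assert (Z1 : ((a ^ Z.of_nat j - 1) * v1 = p * n)%Z).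
    { apply eq_IZR. rewrite !mult_IZR, minus_IZR. rewrite <- Hp. simpl. field; auto. }
    assert (Z2 : ((a ^ Z.of_nat j - 1) * v2 = q * n)%Z).
    { apply eq_IZR. rewrite !mult_IZR, minus_IZR. rewrite <- Hq. simpl. field; auto. }
    exists (u1 * p + u2 * q)%Z.
    replace (a ^ Z.of_nat j - 1)%Z with ((a ^ Z.of_nat j - 1) * (u1 * v1 + u2 * v2))%Z
      by (rewrite B; ring).
    replace ((a ^ Z.of_nat j - 1) * (u1 * v1 + u2 * v2))%Z
      with (u1 * ((a ^ Z.of_nat j - 1) * v1) + u2 * ((a ^ Z.of_nat j - 1) * v2))%Z by ring.
    rewrite Z1, Z2. ring.
Qed.

Theorem proposition4 (A : Mat2) (a b : Z) (Hab : has_eigenvalues A a b) :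
  InPer A 1 /\ (forall k : nat, InP a k -> InPer A k)
            /\ (forall k : nat, InP b k -> InPer A k).
Proof.
  split; [|split].
  - split; [lia|]. exists (0, 0)%R. split.
    + exists 0%Z, 0%Z. unfold fA; simpl. split; ring.
    + intros k Hk; lia.
  - apply per_eig. pose proof (Hab a). lia.
  - apply per_eig. pose proof (Hab b). lia.
Qed.
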